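(* Let $G$ be a group, $A\le\operatorname{Aut}(G)$ with $|A|=n$, and $g\in G$. In the $n$-valued coset group $X=(G,A)$ let $z=\pi(g)$. Let $M\subseteq G$ be the submonoid generated by $\{a(g):a\in A\}$, and let $B^+(e,r)$ and $S^+(e,r)$ denote the set of elements of $M$ of word length at most $r$, respectively exactly $r$, with respect to the generators $\{a(g):a\in A\}$. Then for every $y\in X$ and every $r\ge 0$ the growth function $\xi_y(r)$ of the dynamic $T_z$ at $y$ satisfies $$\frac1n|S^+(e,r)|\le \xi_y(r)\le |B^+(e,r)|.$$
   Context: Coset group: for a group $G$ and finite $A\le\operatorname{Aut}(G)$ with $|A|=n$, $X=G/A$ is the set of $A$-orbits, $\pi:G\to X$ the projection, with $n$-valued multiplication $\pi(g)*\pi(h)=[\pi(g\,a(h)):a\in A]$ (an $n$-multi-set), extended to multi-sets elementwise with multiplicities; unit $\pi(e_G)$, inverse $\pi(g)\mapsto\pi(g^{-1})$. For $z\in X$, the dynamic $T_z:X\to\operatorname{Sym}^nX$ is $T_z(y)=y*z$, with iterates $T_z^0(y)=y$, $T_z^k(y)=T_z^{k-1}(y)*z$, so $T_z^r(y)=y*z*\dots*z$ ($r$ factors $z$). For a multi-set $N$, $\operatorname{Set}(N)$ is the set of distinct elements of $N$. The growth function is $\xi_y(r)=|\operatorname{Set}(T_z^r(y))|$. The word length in $M$ of $m$ is the minimal number of generators $a(g)$ whose product is $m$ (the identity has length $0$). *)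

(* Defs.v *)
From Stdlib Require Import List Arith Lia ClassicalEpsilon.
Import ListNotations.
Set Implicit Arguments.

Record Group := {
  carrier :> Type;
  gmul : carrier -> carrier -> carrier;
  gone : carrier;
  ginv : carrier -> carrier;
  gmulA : forall x y z, gmul x (gmul y z) = gmul (gmul x y) z;
  gmul1 : forall x, gmul gone x = x;
  gmulV : forall x, gmul (ginv x) x = gone }.

Section Coset.
Variable G : Group.

Definition decb (P : Prop) : bool :=
  if excluded_middle_informative P then true else false.

Definition is_aut (f : G -> G) : Prop :=
  (forall x y, f (gmul G x y) = gmul G (f x) (f y)) /\
  exists f' : G -> G, forall x, f' (f x) = x /\ f (f' x) = x.

(* The list A enumerates (without repetition) a finite subgroup of Aut(G);
   |A| = length A. *)
Definition aut_subgroup (A : list (G -> G)) : Prop :=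
  (forall a, In a A -> is_aut a) /\
  (exists a, In a A /\ forall x, a x = x) /\
  (forall a b, In a A -> In b A -> exists c, In c A /\ forall x, c x = a (b x)) /\
  (forall a, In a A -> exists b, In b A /\ forall x, b (a x) = x) /\
  (forall i j, i < length A -> j < length A ->
     (forall x, nth i A (fun x => x) x = nth j A (fun x => x) x) -> i = j).

(* number of R-classes (R an equivalence) among the entries of a list,
   i.e. |Set(N)| for the multiset N of classes *)
Fixpoint nclasses (R : G -> G -> Prop) (l : list G) : nat :=
  match l with
  | [] => 0
  | x :: l' => (if decb (exists y, In y l' /\ R x y) then 0 else 1) + nclasses R l'
  end.

Definition card_in (P : G -> Prop) (l : list G) : nat :=
  nclasses (@eq G) (filter (fun m => decb (P m)) l).

Variable A : list (G -> G).

(* pi(x) = pi(y) : same A-orbit *)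
Definition same_orbit (x y : G) : Prop := exists a, In a A /\ y = a x.

(* Representatives of the n-multiset pi(h) * pi(k) = [pi(h a(k)) : a in A] *)
Definition cmul (h k : G) : list G := map (fun a => gmul G h (a k)) A.

Definition cmul_ms (l : list G) (k : G) : list G := flat_map (fun h => cmul h k) l.

(* representatives of T_z^r(y) for y = pi(h), z = pi(k) *)
Fixpoint T_iter (r : nat) (h k : G) : list G :=
  match r with
  | 0 => [h]
  | S r' => cmul_ms (T_iter r' h k) k
  end.

(* growth function xi_y(r) = |Set(T_z^r(y))|, y = pi(h), z = pi(k) *)
Definition xi (h k : G) (r : nat) : nat := nclasses same_orbit (T_iter r h k).

Definition gens (g : G) : list G := map (fun a => a g) A.

Fixpoint words (g : G) (k : nat) : list G :=
  match k with
  | 0 => [gone G]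
  | S k' => flat_map (fun w => map (fun s => gmul G w s) (gens g)) (words g k')
  end.

Definition wordlen_is (g : G) (m : G) (k : nat) : Prop :=
  In m (words g k) /\ forall j, j < k -> ~ In m (words g j).

Definition card_ball (g : G) (r : nat) : nat :=
  card_in (fun m => exists k, k <= r /\ wordlen_is g m k)
          (flat_map (words g) (seq 0 (S r))).

Definition card_sphere (g : G) (r : nat) : nat :=
  card_in (fun m => wordlen_is g m r) (words g r).

End Coset.

Arguments aut_subgroup {G} A.
Arguments xi {G} A h k r.
Arguments card_ball {G} A g r.
Arguments card_sphere {G} A g r.
Arguments same_orbit {G} A x y.
Arguments T_iter {G} A r h k.
Arguments words {G} A g k.

(* Main.v *)
Require Import Defs.
From Stdlib Require Import List Arith.
From Stdlib Require Import Classical Lia ClassicalEpsilon.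
Import ListNotations.

Section Aux.
Variable G : Group.

Lemma decb_t (P : Prop) : decb P = true -> P.
Proof. unfold decb; destruct (excluded_middle_informative P); congruence. Qed.
Lemma decb_f (P : Prop) : decb P = false -> ~ P.
Proof. unfold decb; destruct (excluded_middle_informative P); congruence. Qed.
Lemma decb_T (P : Prop) : P -> decb P = true.
Proof. unfold decb; destruct (excluded_middle_informative P); tauto. Qed.

Variable R : G -> G -> Prop.

Fixpoint ddR (l : list G) : list G :=
  match l with
  | [] => []
  | x :: l' => if decb (exists y, In y l' /\ R x y) then ddR l' else x :: ddR l'
  end.

Lemma nclasses_dd l : nclasses G R l = length (ddR l).
Proof. induction l as [|x l IH]; simpl; auto.
  destruct (decb _); simpl; auto. Qed.

Lemma dd_incl l : incl (ddR l) l.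
Proof. induction l as [|x l IH]; simpl. apply incl_refl.
  destruct (decb _).
  - intros y Hy; right; auto.
  - intros y [Hy|Hy]; [left; auto | right; auto]. Qed.

Lemma dd_nodup (Rrefl : forall x, R x x) l : NoDup (ddR l).
Proof. induction l as [|x l IH]; simpl. constructor.
  destruct (decb _) eqn:E; auto.
  constructor; auto. intro Hx. apply (decb_f _ E). exists x; split; auto.
  apply (dd_incl l); auto. Qed.

Lemma dd_cover (Rrefl : forall x, R x x) (Rsym : forall x y, R x y -> R y x)
  (Rtr : forall x y z, R x y -> R y z -> R x z) l :
  forall x, In x l -> exists y, In y (ddR l) /\ R y x.
Proof. induction l as [|x l IH]; simpl. tauto.
  intros z Hz. destruct (decb _) eqn:E.
  - destruct Hz as [<-|Hz]; auto.
    destruct (decb_t _ E) as [y [Hy Hxy]].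
    destruct (IH y Hy) as [w [Hw Hwy]]. exists w; split; auto.
    eapply Rtr; [exact Hwy|]. auto.
  - destruct Hz as [<-|Hz].
    + exists x; split; simpl; auto.
    + destruct (IH z Hz) as [w [Hw Hwz]]. exists w; split; simpl; auto.
Qed.
End Aux.

Lemma dd_eq_len (G : Group) (l L : list G) : NoDup l -> incl l L -> length l <= nclasses G (@eq G) L.
Proof. intros Hn Hi. rewrite nclasses_dd. apply NoDup_incl_length; auto.
  intros x Hx. destruct (dd_cover G (@eq G) (@eq_refl G) (@eq_sym G) (@eq_trans G) L x (Hi x Hx))
      as [y [Hy ->]]. auto.
Qed.

Lemma lcancel (G : Group) (u x : G) : gmul G (ginv G u) (gmul G u x) = x.
Proof. rewrite gmulA, gmulV, gmul1; auto. Qed.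

Arguments lcancel {G}.
Lemma linj (G : Group) (u x y : G) : gmul G u x = gmul G u y -> x = y.
Proof. intro H. rewrite <- (lcancel u x), <- (lcancel u y), H; auto. Qed.

Arguments linj {G}.
Lemma rinv (G : Group) (x : G) : gmul G x (ginv G x) = gone G.
Proof.
  set (y := gmul G x (ginv G x)).
  assert (Hy : gmul G y y = y).
  { unfold y. rewrite <- gmulA, (gmulA G (ginv G x)), gmulV, gmul1. auto. }
  transitivity (gmul G (ginv G y) (gmul G y y)).
  { rewrite gmulA, gmulV, gmul1; auto. }
  rewrite Hy. apply gmulV.
Qed.
Arguments rinv {G}.
Lemma gmul1r (G : Group) (x : G) : gmul G x (gone G) = x.
Proof. rewrite <- (gmulV G x), gmulA, rinv, gmul1. auto. Qed.

Arguments gmul1r {G}.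
Lemma T_iter_in (G : Group) (A : list (G -> G)) (h g : G) r x :
  In x (T_iter A r h g) <-> exists w, In w (words A g r) /\ x = gmul G h w.
Proof.
  revert x; induction r as [|r IH]; intro x; simpl.
  - split. intros [<-|[]]. exists (gone G); split; auto. rewrite gmul1r; auto.
    intros [w [[<-|[]] ->]]. left. rewrite gmul1r; auto.
  - unfold cmul_ms, cmul, gens. rewrite !in_flat_map. split.
    + intros [y [Hy Hx]]. apply IH in Hy as [w [Hw ->]].
      apply in_map_iff in Hx as [a [<- Ha]].
      exists (gmul G w (a g)); split. apply in_flat_map. exists w; split; auto.
      apply in_map_iff. exists (a g); split; auto. apply in_map_iff; eauto.
      rewrite gmulA; auto.
    + intros [w [Hw ->]]. apply in_flat_map in Hw as [v [Hv Hw]].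
      apply in_map_iff in Hw as [s [<- Hs]]. apply in_map_iff in Hs as [a [<- Ha]].
      exists (gmul G h v); split. apply IH; eauto.
      apply in_map_iff. exists a; split; auto. rewrite gmulA; auto.
Qed.

Lemma min_len (G : Group) (A : list (G -> G)) (g m : G) k :
  In m (words A g k) -> exists k', k' <= k /\ wordlen_is G A g m k'.
Proof.
  induction k as [k IH] using (well_founded_induction lt_wf). intro Hk.
  destruct (classic (exists j, j < k /\ In m (words A g j))) as [[j [Hj Hm]]|Hn].
  - destruct (IH j Hj Hm) as [k' [Hk' Hw]]. exists k'; split; auto; lia.
  - exists k; split; auto. split; auto. intros j Hj Hm. apply Hn; eauto.
Qed.

Theorem mainTheorem4 (G : Group) (A : list (G -> G)) (g : G)
  (hA : aut_subgroup A) (h : G) (r : nat) :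
  card_sphere A g r <= length A * xi A h g r /\ xi A h g r <= card_ball A g r.
Proof.
  destruct hA as [_ [[e [He Hid]] [Hcomp [Hinv _]]]].
  assert (Rrefl : forall x, same_orbit A x x).
  { intro x. exists e; split; auto. }
  assert (Rsym : forall x y, same_orbit A x y -> same_orbit A y x).
  { intros x y [a [Ha ->]]. destruct (Hinv a Ha) as [b [Hb Hba]]. exists b; split; auto. }
  assert (Rtr : forall x y z, same_orbit A x y -> same_orbit A y z -> same_orbit A x z).
  { intros x y z [a [Ha ->]] [b [Hb ->]]. destruct (Hcomp b a Hb Ha) as [c [Hc Hc']].
    exists c; split; auto. }
  set (T := T_iter A r h g).
  unfold xi. fold T. rewrite nclasses_dd.
  split.
  - unfold card_sphere, card_in. rewrite nclasses_dd.
    set (S := ddR G eq _).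
    assert (HS : NoDup S) by (apply dd_nodup; auto).
    rewrite <- (length_map (gmul G h) S).
    rewrite Nat.mul_comm, <- (flat_map_constant_length (fun y => map (fun a => a y) A)
      (ddR G (same_orbit A) T)).
    2: { intros; apply length_map. }
    apply NoDup_incl_length.
    + apply NoDup_map_NoDup_ForallPairs; auto.
      intros x y _ _. apply linj.
    + intros x Hx. apply in_map_iff in Hx as [w [<- Hw]].
      apply dd_incl in Hw. apply filter_In in Hw as [Hw _].
      assert (HT : In (gmul G h w) T) by (apply T_iter_in; eauto).
      destruct (dd_cover G (same_orbit A) Rrefl Rsym Rtr T _ HT) as [y [Hy [a [Ha Hay]]]].
      apply in_flat_map. exists y; split; auto. apply in_map_iff. eauto.
  - unfold card_ball, card_in.
    rewrite <- (length_map (gmul G (ginv G h))).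
    apply dd_eq_len.
    + apply NoDup_map_NoDup_ForallPairs.
      * intros x y _ _. apply linj.
      * apply dd_nodup; auto.
    + intros x Hx. apply in_map_iff in Hx as [y [<- Hy]].
      apply dd_incl in Hy. apply T_iter_in in Hy as [w [Hw ->]].
      rewrite lcancel. apply filter_In; split.
      * apply in_flat_map. exists r; split; auto. apply in_seq; lia.
      * apply decb_T. apply min_len; auto.
Qed.
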